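(* Let $\Gamma$ be a connected signed graph. Then all roots of the polynomial $t\mapsto\mathcal{M}(\Gamma(t))$ are real and non-negative.
   Context: A signed graph $\Gamma$ is a finite simple undirected graph with vertex set $\{1,\dots,N\}$ in which every edge $\{i,j\}$ carries a nonzero real weight $\gamma_{ij}$, which may be of either sign. For real $t$, $\Gamma(t)$ is the weighted graph with the same edges as $\Gamma$ and weights $\gamma_{ij}(t)=\gamma_{ij}$ if $\gamma_{ij}>0$ and $\gamma_{ij}(t)=t\gamma_{ij}$ if $\gamma_{ij}<0$. For a weighted graph $H$, $\mathcal{M}(H)=\sum_{T}\prod_{e\in E(T)}w_H(e)$, the sum over all spanning trees $T$ of $H$ of the product of the edge weights $w_H(e)$; thus $\mathcal{M}(\Gamma(t))$ is a polynomial in $t$. Equivalently $\mathcal{M}(H)=\frac{(-1)^{n-1}}{n}\prod_{i=2}^n\lambda_i$, where $n=|V(H)|$ and $\lambda_1=0,\lambda_2,\dots,\lambda_n$ are the eigenvalues of the Laplacian of $H$ (off-diagonal entries the weights, diagonal entries minus the row sums of the weights). *)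

(* Defs.v *)
From HB Require Import structures.
From mathcomp Require Import all_boot all_order all_algebra.
From mathcomp Require Import reals.
From mathcomp Require Export complex.
Set Implicit Arguments. Unset Strict Implicit. Unset Printing Implicit Defensive.
Import Order.TTheory GRing.Theory Num.Theory.
Local Open Scope ring_scope.

Section Defs.
Variable R : realType.
Variable N : nat.

(* A signed graph on vertex set 'I_N is given by a weight function w:
   edge {i,j} present iff w i j != 0, weight gamma_ij = w i j (any sign),
   w symmetric with no loops. *)
Definition signed_graph (w : 'I_N -> 'I_N -> R) : Prop :=
  (forall i j, w i j = w j i) /\ (forall i, w i i = 0).

Definition adj (w : 'I_N -> 'I_N -> R) : rel 'I_N := fun i j => w i j != 0.

Definition connected_graph (w : 'I_N -> 'I_N -> R) : Prop :=
  forall i j : 'I_N, connect (adj w) i j.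

Definition edge_set (w : 'I_N -> 'I_N -> R) (T : {set 'I_N * 'I_N}) : bool :=
  [forall e in T, (e.1 < e.2)%N && (w e.1 e.2 != 0)].

Definition tadj (T : {set 'I_N * 'I_N}) : rel 'I_N :=
  fun i j => ((i, j) \in T) || ((j, i) \in T).

Definition spans_connected (T : {set 'I_N * 'I_N}) : bool :=
  [forall i, forall j, connect (tadj T) i j].

Definition spanning_tree (w : 'I_N -> 'I_N -> R) (T : {set 'I_N * 'I_N}) : bool :=
  [&& edge_set w T, spans_connected T &
      [forall e in T, ~~ spans_connected (T :\ e)]].

Definition edge_weight_t (w : 'I_N -> 'I_N -> R) (e : 'I_N * 'I_N) : {poly R} :=
  if 0 < w e.1 e.2 then (w e.1 e.2)%:P else w e.1 e.2 *: 'X.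

Definition M_poly (w : 'I_N -> 'I_N -> R) : {poly R} :=
  \sum_(T : {set 'I_N * 'I_N} | spanning_tree w T) \prod_(e in T) edge_weight_t w e.

End Defs.

(* Main.v *)
Require Import Defs.
From HB Require Import structures.
From mathcomp Require Import all_boot all_order all_algebra all_fingroup.
From mathcomp Require Import reals complex.
From mathcomp Require Import ring.
Set Implicit Arguments. Unset Strict Implicit. Unset Printing Implicit Defensive.
Import Order.TTheory GRing.Theory Num.Theory.
Local Open Scope ring_scope.

Section TU.
Variable F : fieldType.

Lemma eqSome (T : eqType) (a b : T) : (Some a == Some b) = (a == b).
Proof. by []. Qed.

Lemma eqNS (T : eqType) (a : T) : (None == Some a) = false.
Proof. by []. Qed.

Definition oind m (o : option 'I_m) (i : 'I_m) : F := (o == Some i)%:R.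
Definition TUmx m (p q : 'I_m -> option 'I_m) : 'M[F]_m :=
  \matrix_(i, j) (oind (p j) i - oind (q j) i).

Lemma sum_oind m (k : 'I_m) : \sum_i oind (Some k) i = 1.
Proof.
rewrite (bigD1 k) //= /oind eqSome eqxx big1 ?addr0 // => i ik.
by rewrite eqSome eq_sym (negPf ik).
Qed.

Lemma oind_lift m (o : option 'I_m.+1) i0 (i : 'I_m) :
  oind (obind (unlift i0) o) i = oind o (lift i0 i).
Proof.
case: o => [k|] //=; rewrite /oind /=; case: unliftP => [k' ->|->] /=.
  by rewrite !eqSome (inj_eq lift_inj).
by rewrite eqSome (negPf (neq_lift _ _)).
Qed.

Lemma minorE m (p q : 'I_m.+1 -> option 'I_m.+1) i0 j :
  row' i0 (col' j (TUmx p q)) =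
  TUmx (fun j' => obind (unlift i0) (p (lift j j')))
       (fun j' => obind (unlift i0) (q (lift j j'))).
Proof. by apply/matrixP => a b; rewrite !mxE !oind_lift. Qed.

Lemma comb (u d : F) : u ^+ 2 = 1 -> (d = 0 \/ d ^+ 2 = 1) ->
  (u * d = 0 \/ (u * d) ^+ 2 = 1).
Proof. by move=> Hu [->|Hd]; [left; rewrite mulr0 | right; rewrite exprMn Hu Hd mulr1]. Qed.

Lemma sign2 k : ((-1) ^+ k : F) ^+ 2 = 1.
Proof. by rewrite -exprM mulnC exprM sqrrN !expr1n. Qed.

Lemma TU m (p q : 'I_m -> option 'I_m) : (forall j, p j = q j -> p j = None) ->
  \det (TUmx p q) = 0 \/ \det (TUmx p q) ^+ 2 = 1.
Proof.
elim: m p q => [|m IH] p q Hpq.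
  by right; rewrite det_mx00 expr1n.
have Hmin : forall i0 j, \det (row' i0 (col' j (TUmx p q))) = 0 \/
                         \det (row' i0 (col' j (TUmx p q))) ^+ 2 = 1.
  move=> i0 j; rewrite minorE; apply: IH => j'.
  case Ea: (p (lift j j')) => [x|]; case Eb: (q (lift j j')) => [y|] //=.
  case: (unliftP i0 x) => [x' Ex|Ex]; case: (unliftP i0 y) => [y' Ey|Ey] //=.
  move=> [] eq; have := Hpq (lift j j'); rewrite Ea Eb Ex Ey eq => /(_ erefl).
  by [].
case: (pickP (fun j => (p j == None) && (q j == None))) => [j /andP [/eqP pj /eqP qj] | H1].
  left; rewrite (expand_det_col _ j) big1 // => i _.
  by rewrite mxE pj qj /oind subrr mul0r.
case: (pickP (fun j => (p j == None) != (q j == None))) => [j Hj | H2]; last first.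
  left.
  have H0 : const_mx 1 *m TUmx p q = 0 :> 'rV[F]_m.+1.
    apply/rowP => j; rewrite !mxE; under eq_bigr do rewrite !mxE mul1r.
    move: (H1 j) (H2 j); case: (p j) => [a|]; case: (q j) => [b|] //= _ _.
    by rewrite sumrB !sum_oind subrr.
  have := congr1 (fun M => (M *m \adj (TUmx p q)) 0 0) H0.
  rewrite /= -mulmxA mul_mx_adj mul0mx mul_mx_scalar !mxE mulr1.
  by [].
rewrite (expand_det_col _ j).
move: Hj; case Ep: (p j) => [a|]; case Eq: (q j) => [b|] //= _.
  rewrite (bigD1 a) //= big1 ?addr0; last first.
    by move=> i ia; rewrite mxE Ep Eq /oind eqSome eq_sym (negPf ia) subr0 mul0r.
  rewrite mxE Ep Eq /oind eqSome eqxx subr0 mul1r /cofactor.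
  by apply: comb; [exact: sign2 | exact: Hmin].
rewrite (bigD1 b) //= big1 ?addr0; last first.
  by move=> i ib; rewrite mxE Ep Eq /oind eqNS eqSome eq_sym (negPf ib) subrr mul0r.
rewrite mxE Ep Eq /oind eqNS eqSome eqxx sub0r /cofactor mulrA.
apply: comb; last exact: Hmin.
by rewrite exprMn sqrrN expr1n mul1r sign2.
Qed.

End TU.

Section MT.
Variable F : fieldType.
Variable n : nat.
Local Notation V := 'I_n.+1.
Local Notation K := (V * V)%type.
Local Notation r := (@ord_max n).
Local Notation iota := (lift (@ord_max n)).

Definition Xe (i : 'I_n) (e : K) : F := (iota i == e.1)%:R - (iota i == e.2)%:R.
Definition ext (v : 'I_n -> F) (u : V) : F :=
  if unlift r u is Some i then v i else 0.

Lemma ext_eq v v' u : (forall a, v a = v' a) -> ext v u = ext v' u.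
Proof. by move=> H; rewrite /ext; case: unlift. Qed.

Lemma ext_r v : ext v r = 0.
Proof. by rewrite /ext unlift_none. Qed.

Lemma ext_lift v i : ext v (iota i) = v i.
Proof. by rewrite /ext liftK. Qed.

Lemma ext_iota (x : V -> F) u : x r = 0 -> ext (fun a => x (iota a)) u = x u.
Proof. by move=> xr; rewrite /ext; case: unliftP => [j ->|->] //. Qed.

Lemma sum_ind (v : 'I_n -> F) (u : V) :
  \sum_a v a * (iota a == u)%:R = ext v u.
Proof.
rewrite /ext; case: unliftP => [j ->|->].
  rewrite (bigD1 j) //= eqxx mulr1 big1 ?addr0 // => a /negPf.
  by rewrite (inj_eq lift_inj) => ->; rewrite mulr0.
by rewrite big1 // => a _; rewrite eq_sym (negPf (neq_lift _ _)) mulr0.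
Qed.

Lemma sumX (v : 'I_n -> F) e :
  \sum_a v a * Xe a e = ext v e.1 - ext v e.2.
Proof.
rewrite /Xe; under eq_bigr do rewrite mulrBr.
by rewrite sumrB !sum_ind.
Qed.

Implicit Types S : {set K}.
Definition lk (S : {set K}) := forall x : V -> F, x r = 0 ->
  (forall e, e \in S -> x e.1 = x e.2) -> forall u, x u = 0.

Lemma conn_lk S : spans_connected S -> lk S.
Proof.
move=> /forallP /(_ r) /forallP H x xr He u.
have cl : closed (tadj S) [pred v | x v == x r].
  by move=> a b; rewrite /tadj !inE => /orP [] /He /= ->.
have := closed_connect cl (H u); rewrite !inE eqxx => /esym /eqP.
by rewrite xr.
Qed.

Lemma tadj_sym S : symmetric (tadj S).
Proof. by move=> a b; rewrite /tadj orbC. Qed.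

Lemma notconn S : ~~ spans_connected S ->
  exists x : V -> F, [/\ x r = 0, forall e, e \in S -> x e.1 = x e.2 &
     exists u, x u != 0].
Proof.
move=> /forallPn [a] /forallPn [b] Hab.
have csym := sym_connect_sym (tadj_sym S).
pose x := fun v => if connect (tadj S) r v then (0 : F) else 1.
exists x; split.
- by rewrite /x connect0.
- move=> e eS; rewrite /x.
  have t12 : tadj S e.1 e.2 by rewrite /tadj -surjective_pairing eS.
  have -> : connect (tadj S) r e.1 = connect (tadj S) r e.2; last by [].
  apply/idP/idP => H.
    exact: connect_trans H (connect1 t12).
  by apply: (connect_trans H); rewrite csym; apply: connect1.
- case: (boolP (connect (tadj S) r a)) => ra.
    exists b; rewrite /x; case: ifP => [rb|_]; last exact: oner_neq0.
    by case/negP: Hab; apply: (connect_trans _ rb); rewrite csym.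
  by exists a; rewrite /x (negPf ra) oner_neq0.
Qed.

Lemma lk_conn S : lk S -> spans_connected S.
Proof.
move=> H; apply/negPn/negP => /notconn [x [xr xe [u xu]]].
by move: xu; rewrite (H x xr xe u) eqxx.
Qed.


Definition Arows S : 'M[F]_(#|S|, n) := \matrix_(j, a) Xe a (enum_val j).

Lemma Arows_mul S (c : 'cV[F]_n) j :
  (Arows S *m c) j 0 = ext (fun a => c a 0) (enum_val j).1
                       - ext (fun a => c a 0) (enum_val j).2.
Proof.
rewrite !mxE -sumX; apply: eq_bigr => a _; by rewrite mxE mulrC.
Qed.

Lemma lk_size S : lk S -> (n <= #|S|)%N.
Proof.
move=> H.
have rf : row_free (Arows S)^T.
  rewrite -kermx_eq0; apply: contraT => /rowV0Pn [v /sub_kermxP vA vnz].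
  case/eqP: vnz; apply/rowP => a; rewrite mxE.
  have He : forall e, e \in S -> ext (fun a => v 0 a) e.1 = ext (fun a => v 0 a) e.2.
    move=> e eS; apply/eqP; rewrite -subr_eq0.
    have := congr1 (fun M : 'M[F]_(1, #|S|) => M 0 (enum_rank_in eS e)) vA.
    rewrite !mxE; under eq_bigr do rewrite !mxE.
    by rewrite enum_rankK_in // sumX => ->.
  by have := H _ (ext_r _) He (iota a); rewrite ext_lift.
move: rf; rewrite /row_free mxrank_tr => /eqP Hr.
by have := rank_leq_row (Arows S); rewrite Hr.
Qed.

Lemma lk_drop S : lk S -> (n < #|S|)%N -> exists2 e, e \in S & lk (S :\ e).
Proof.
move=> H lt.
have nrf : ~~ row_free (Arows S).
  rewrite /row_free; apply: contraL lt => /eqP <-; rewrite -leqNgt.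
  exact: rank_leq_col.
move: nrf; rewrite -kermx_eq0 => /rowV0Pn [v /sub_kermxP vA vnz].
have [j vj] : exists j, v 0 j != 0.
  apply/existsP; apply: contraR vnz => /existsPn Hj; apply/eqP/rowP => j.
  by move: (Hj j); rewrite negbK mxE => /eqP.
exists (enum_val j); first exact: enum_valP.
move=> x xr Hx.
pose c : 'cV[F]_n := \col_a x (iota a).
have Ac : forall j', (Arows S *m c) j' 0 = x (enum_val j').1 - x (enum_val j').2.
  move=> j'; rewrite Arows_mul.
  rewrite !(@ext_eq _ (fun a => x (iota a))) ?ext_iota // => a; by rewrite mxE.
have Hc : forall j', j' != j -> (Arows S *m c) j' 0 = 0.
  move=> j' nj; rewrite Ac; apply/eqP; rewrite subr_eq0; apply/eqP.
  apply: Hx; rewrite !inE enum_valP andbT.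
  by apply: contra nj => /eqP /enum_val_inj ->.
have Hj : (Arows S *m c) j 0 = 0.
  have := congr1 (fun M => (M *m c) 0 0) vA.
  rewrite -mulmxA mul0mx !mxE (bigD1 j) //= big1 ?addr0.
    by move/eqP; rewrite mulf_eq0 (negPf vj) /= => /eqP; rewrite mxE.
  by move=> j' nj; rewrite Hc // mulr0.
apply: H => // e eS.
case: (eqVneq e (enum_val j)) => [->|ne].
  by apply/eqP; rewrite -subr_eq0 -Ac Hj.
by apply: Hx; rewrite !inE ne.
Qed.

Lemma tree_iff (E : pred K) S :
  [&& [forall e in S, E e], spans_connected S &
      [forall e in S, ~~ spans_connected (S :\ e)]] =
  [&& [forall e in S, E e], spans_connected S & #|S| == n].
Proof.
case: (boolP [forall e in S, E e]) => //= _.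
case: (boolP (spans_connected S)) => //= /conn_lk H.
apply/idP/idP.
  move=> /forallP Hm; rewrite eqn_leq lk_size // andbT leqNgt.
  apply/negP => lt; have [e eS /lk_conn He] := lk_drop H lt.
  by move: (Hm e); rewrite eS He.
move=> /eqP Hs; apply/forallP => e; apply/implyP => eS; apply/negP.
move=> /conn_lk /lk_size; rewrite (cardsD1 e) eS in Hs.
move=> le; have : (#|S :\ e| < 1 + #|S :\ e|)%N by rewrite add1n.
by rewrite Hs ltnNge le.
Qed.

Definition Lmx (q : K -> F) : 'M[F]_n := \matrix_(i, j) \sum_e Xe i e * q e * Xe j e.
Definition Mf (f : {ffun 'I_n -> K}) : 'M[F]_n := \matrix_(a, b) Xe a (f b).

Lemma ac4 (a x y z : F) : a * (x * y * z) = y * x * (a * z).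
Proof. ring. Qed.

Lemma ac3 (x a y : F) : y * (a * x) = x * (a * y).
Proof. ring. Qed.

Lemma step1 q : \det (Lmx q) =
  \sum_(f : {ffun 'I_n -> K}) (\prod_i q (f i)) * ((\prod_i Xe i (f i)) * \det (Mf f)).
Proof.
transitivity (\sum_(s : 'S_n) \sum_(f : {ffun 'I_n -> K})
   (-1) ^+ s * \prod_i (Xe i (f i) * q (f i) * Xe (s i) (f i))).
  apply: eq_bigr => s _; rewrite -big_distrr /=; congr (_ * _).
  rewrite -(bigA_distr_bigA (fun i e => Xe i e * q e * Xe (s i) e)) /=.
  by apply: eq_bigr => i _; rewrite mxE.
rewrite exchange_big; apply: eq_bigr => f _ /=.
rewrite -det_tr mulrA big_distrr /=; apply: eq_bigr => s _.
rewrite !big_split /=.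
have -> : \prod_i (Mf f)^T i (s i) = \prod_i Xe (s i) (f i).
  by apply: eq_bigr => i _; rewrite !mxE.
by rewrite ac4.
Qed.

Lemma Mf_noninj (f : {ffun 'I_n -> K}) : ~~ injectiveb f -> \det (Mf f) = 0.
Proof.
move=> /injectivePn [b1 [b2 nb fb]]; rewrite -det_tr.
by apply: (determinant_alternate nb) => a; rewrite !mxE fb.
Qed.

Definition imf (f : {ffun 'I_n -> K}) : {set K} := [set f i | i : 'I_n].

Definition DS S := \sum_(f : {ffun 'I_n -> K} | injectiveb f && (imf f == S))
   (\prod_i Xe i (f i)) * \det (Mf f).

Lemma step3 q : \det (Lmx q) = \sum_(S : {set K}) (\prod_(e in S) q e) * DS S.
Proof.
rewrite step1 (bigID (fun f : {ffun 'I_n -> K} => injectiveb f)) /=.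
rewrite [X in _ + X]big1 ?addr0; last by move=> f /Mf_noninj ->; rewrite !mulr0.
rewrite (partition_big imf xpredT) //=; apply: eq_bigr => S _.
rewrite /DS big_distrr /=; apply: eq_bigr => f /andP [fi /eqP <-].
congr (_ * _); rewrite /imf big_imset /=; last by move=> x y _ _; exact: (injectiveP _ fi).
by [].
Qed.

Lemma card_imf (f : {ffun 'I_n -> K}) : injective f -> #|imf f| = n.
Proof. by move=> fi; rewrite card_imset // card_ord. Qed.

Lemma ex_f0 S : #|S| = n -> exists f0 : {ffun 'I_n -> K}, injective f0 /\ imf f0 = S.
Proof.
move=> Hs; exists [ffun i => enum_val (cast_ord (esym Hs) i)].
have inj : injective [ffun i => enum_val (cast_ord (esym Hs) i)].
  by move=> a b; rewrite !ffunE => /enum_val_inj /cast_ord_inj.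
split => //; apply/eqP; rewrite eqEcard; apply/andP; split.
  apply/subsetP => e /imsetP [i _ ->]; rewrite ffunE; exact: enum_valP.
by rewrite card_imf // Hs.
Qed.

Lemma DS_val S (f0 : {ffun 'I_n -> K}) :
  injective f0 -> imf f0 = S -> DS S = \det (Mf f0) ^+ 2.
Proof.
move=> inj0 im0.
pose h := fun (s : 'S_n) => [ffun i => f0 (s i)].
pose g := fun f : {ffun 'I_n -> K} => [ffun i => odflt i [pick j | f0 j == f i]].
pose h' := fun f => insubd (1%g : 'S_n) (g f).
have hinj : forall s, injective (h s).
  by move=> s a b; rewrite !ffunE => /inj0 /perm_inj.
have him : forall s, imf (h s) = S.
  move=> s; apply/eqP; rewrite eqEcard card_imf // -im0 card_imf // leqnn andbT.
  apply/subsetP => e /imsetP [i _ ->]; rewrite ffunE; exact: imset_f.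
rewrite /DS (reindex h); last first.
  exists h' => [s _ | f /andP [fi /eqP imf_f]].
  - have E : g (h s) = pval s.
      apply/ffunP => i; rewrite !ffunE; case: pickP => [j|/(_ (s i))].
        by move=> /eqP /inj0 ->; rewrite pvalE.
      by rewrite eqxx.
    by rewrite /h' E valKd.
  - have Hg : forall i, f0 (g f i) = f i.
      move=> i; rewrite ffunE; case: pickP => [j /eqP //|H].
      have : f i \in S by rewrite -imf_f; exact: imset_f.
      by rewrite -im0 => /imsetP [j _ Ej]; move: (H j); rewrite Ej eqxx.
    have gi : injectiveb (g f).
      apply/injectiveP => a b E; apply: (injectiveP _ fi).
      by rewrite -Hg E Hg.
    apply/ffunP => i; rewrite ffunE /h'.
    by rewrite -pvalE /h' insubdK.
rewrite (eq_bigl xpredT); last first.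
  by move=> s; rewrite him eqxx andbT; apply/injectiveP.
have Edet : forall s : 'S_n, \det (Mf (h s)) = (-1) ^+ s * \det (Mf f0).
  move=> s; have -> : Mf (h s) = col_perm s (Mf f0).
    by apply/matrixP => a b; rewrite !mxE ffunE.
  by rewrite col_permE det_mulmx det_perm odd_permV mulrC.
under eq_bigr do rewrite Edet.
rewrite expr2 [X in _ = _ * X]/determinant big_distrr /=.
apply: eq_bigr => s _.
have -> : \prod_i Xe i (h s i) = \prod_i Mf f0 i (s i).
  by apply: eq_bigr => i _; rewrite mxE ffunE.
exact: ac3.
Qed.

Lemma Mf_mul (f0 : {ffun 'I_n -> K}) (v : 'rV[F]_n) b :
  (v *m Mf f0) 0 b = ext (fun a => v 0 a) (f0 b).1 - ext (fun a => v 0 a) (f0 b).2.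
Proof. rewrite !mxE -sumX; apply: eq_bigr => a _; by rewrite mxE. Qed.

Lemma det_conn S (f0 : {ffun 'I_n -> K}) :
  imf f0 = S -> spans_connected S -> \det (Mf f0) != 0.
Proof.
move=> im0 /conn_lk H; apply/negP => /det0P [v vnz vM].
case/eqP: vnz; apply/rowP => a; rewrite mxE.
have He : forall e, e \in S -> ext (fun a => v 0 a) e.1 = ext (fun a => v 0 a) e.2.
  move=> e; rewrite -im0 => /imsetP [b _ ->]; apply/eqP.
  by rewrite -subr_eq0 -Mf_mul vM mxE.
by have := H _ (ext_r _) He (iota a); rewrite ext_lift.
Qed.

Lemma det_notconn S (f0 : {ffun 'I_n -> K}) :
  imf f0 = S -> ~~ spans_connected S -> \det (Mf f0) = 0.
Proof.
move=> im0 /notconn [x [xr xe [u xu]]]; apply/eqP/det0P.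
exists (\row_a x (iota a)).
  apply: contra xu => /eqP v0; case: (unliftP r u) => [a ->|->]; last by rewrite xr.
  by have := congr1 (fun M : 'rV[F]_n => M 0 a) v0; rewrite !mxE => ->.
apply/rowP => b; rewrite Mf_mul mxE.
rewrite !(@ext_eq _ (fun a => x (iota a))) ?ext_iota //; try by move=> a; rewrite mxE.
have : f0 b \in S by rewrite -im0; exact: imset_f.
by move/xe ->; rewrite subrr.
Qed.

Lemma iota_unlift a (u : V) : (iota a == u) = (unlift r u == Some a).
Proof.
case: unliftP => [j ->|->].
  by rewrite (inj_eq lift_inj) eqSome eq_sym.
by rewrite eqNS eq_sym (negPf (neq_lift _ _)).
Qed.

Lemma MTT (E : pred K) (q : K -> F) :
  (forall e, q e != 0 -> E e) -> (forall e, E e -> e.1 != e.2) ->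
  \det (Lmx q) = \sum_(S : {set K} | [&& [forall e in S, E e],
       spans_connected S & #|S| == n]) \prod_(e in S) q e.
Proof.
move=> HqE HE.
rewrite step3 [RHS]big_mkcond /=; apply: eq_bigr => S _.
case: (boolP [forall e in S, E e]) => /= HS; last first.
  have [e eS nE] : exists2 e, e \in S & ~~ E e.
    by move: HS => /forallPn [e]; rewrite negb_imply => /andP [eS nE]; exists e.
  have qe : q e = 0 by apply/eqP; apply: contraNT nE; exact: HqE.
  by rewrite (bigD1 e) //= qe !mul0r.
case: (boolP (#|S| == n)) => [/eqP Hs|Hs]; last first.
  rewrite andbF /DS [X in _ * X]big_pred0 ?mulr0 // => f.
  apply/negbTE/negP => /andP [/injectiveP fi /eqP imS].
  by move: Hs; rewrite -imS card_imf // eqxx.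
have [f0 [inj0 im0]] := ex_f0 Hs.
rewrite (DS_val inj0 im0) andbT.
case: (boolP (spans_connected S)) => Hc; last first.
  by rewrite (det_notconn im0 Hc) expr2 !mulr0.
have nz := det_conn im0 Hc.
have EM : Mf f0 = TUmx F (fun b => unlift r (f0 b).1) (fun b => unlift r (f0 b).2).
  by apply/matrixP => a b; rewrite !mxE /oind /Xe !iota_unlift.
have HTU : forall b, unlift r (f0 b).1 = unlift r (f0 b).2 -> unlift r (f0 b).1 = None.
  move=> b.
  case: (unliftP r (f0 b).1) => [x Ex|Ex]; case: (unliftP r (f0 b).2) => [y Ey|Ey] //=.
  move=> [xy]; have : f0 b \in S by rewrite -im0; exact: imset_f.
  move=> /(implyP (forallP HS (f0 b))) /HE.
  by rewrite Ex Ey xy eqxx.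
have := @TU F n _ _ HTU; rewrite -EM => -[D0|D2].
  by move: nz; rewrite D0 eqxx.
by rewrite D2 mulr1.
Qed.

End MT.

Lemma quad (C : comRingType) (m : nat) (k : finType) (a b : 'I_m -> C)
    (X : 'I_m -> k -> C) (q : k -> C) :
  \sum_j (\sum_i a i * \sum_e X i e * q e * X j e) * b j =
  \sum_e q e * ((\sum_i a i * X i e) * (\sum_j b j * X j e)).
Proof.
transitivity (\sum_j \sum_i \sum_e q e * ((a i * X i e) * (b j * X j e))).
  apply: eq_bigr => j _; rewrite big_distrl; apply: eq_bigr => i _ /=.
  rewrite big_distrr big_distrl; apply: eq_bigr => e _ /=; ring.
rewrite exchange_big; under eq_bigr do rewrite exchange_big.
rewrite exchange_big; apply: eq_bigr => e _ /=.
rewrite big_distrl big_distrr; apply: eq_bigr => i _ /=.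
rewrite big_distrr big_distrr; apply: eq_bigr => j _ /=.
by [].
Qed.

Local Open Scope complex_scope.

Theorem mainTheorem4 (R : realType) (N : nat) (w : 'I_N -> 'I_N -> R) :
  signed_graph w -> connected_graph w ->
  forall z : R[i], root (map_poly (fun x : R => x%:C) (M_poly w)) z ->
    Im z = 0 /\ 0 <= Re z.
Proof.
case: N w => [|n] w [wsym wdiag] wconn z.
  have -> : M_poly w = 1.
    rewrite /M_poly (big_pred1 set0) ?big_set0 // => T.
    have -> : T = set0 by apply/setP => -[[]].
    rewrite /= eqxx /spanning_tree /edge_set /spans_connected.
    by apply/and3P; split; apply/forallP => -[[]].
  by rewrite /root rmorph1 hornerC oner_eq0.
pose E : pred ('I_n.+1 * 'I_n.+1) := fun e => (e.1 < e.2)%N && (w e.1 e.2 != 0).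
pose qe := fun e => if E e then (map_poly (fun x : R => x%:C) (edge_weight_t w e)).[z]
                    else 0 : R[i].
have HA : (map_poly (fun x : R => x%:C) (M_poly w)).[z] = \det (Lmx qe).
  rewrite (@MTT _ _ E qe); last 2 first.
  - by move=> e; rewrite /qe; case: (E e) => //; rewrite eqxx.
  - by move=> e /andP [lt _]; rewrite neq_ltn lt.
  rewrite /M_poly rmorph_sum horner_sum.
  rewrite (eq_bigl (fun S : {set 'I_n.+1 * 'I_n.+1} => [&& [forall e in S, E e], spans_connected S & #|S| == n])); last first.
    by move=> T; exact: (tree_iff R[i] E T).
  apply: eq_bigr => S /andP [/forallP HS _].
  rewrite rmorph_prod horner_prod; apply: eq_bigr => e eS.
  by rewrite /qe (implyP (HS e) eS).
move=> /rootP; rewrite HA => /eqP /det0P [v vnz vL].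
pose vv := fun a => v 0 a.
pose x := ext vv.
pose ye := fun e : 'I_n.+1 * 'I_n.+1 => x e.1 - x e.2.
pose nn := fun e => ye e * ((ye e)^*)%R.
have L0 : forall j, \sum_i vv i * \sum_e Xe R[i] i e * qe e * Xe R[i] j e = 0.
  move=> j; transitivity ((v *m Lmx qe) 0 j); last by rewrite vL mxE.
  by rewrite mxE; apply: eq_bigr => i _; rewrite mxE.
have ext_conj : forall u, ext (fun j => ((vv j)^*)%R) u = ((x u)^*)%R.
  by move=> u; rewrite /x /ext; case: unlift => // ; rewrite conjC0.
have Hq : \sum_e qe e * nn e = 0.
  have := quad vv (fun j => ((vv j)^*)%R) (@Xe R[i] n) qe.
  rewrite big1; last by move=> j _; rewrite L0 mul0r.
  move=> H0; rewrite [RHS]H0; apply: eq_bigr => e _.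
  by rewrite /nn /ye !sumX !ext_conj rmorphB.
pose we := fun e : 'I_n.+1 * 'I_n.+1 => w e.1 e.2.
pose P := \sum_(e | E e && (0 < we e)) (we e)%:C * nn e.
pose Q := \sum_(e | E e && ~~ (0 < we e)) (we e)%:C * nn e.
have Hsplit : \sum_e qe e * nn e = P + z * Q.
  rewrite /P /Q mulr_sumr [X in _ = X + _]big_mkcond [X in _ = _ + X]big_mkcond.
  rewrite -big_split /=; apply: eq_bigr => e _.
  rewrite /qe; case: (E e) => /=; last by rewrite mul0r addr0.
  rewrite /we /edge_weight_t; case: (boolP (0 < w e.1 e.2)) => pos /=.
    by rewrite map_polyC hornerC addr0.
  by rewrite map_polyZ map_polyX hornerZ hornerX add0r -mulrA mulrCA.
have nn_ge0 : forall e, 0 <= nn e by move=> e; rewrite /nn -normCK exprn_ge0.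
have P_ge0 : 0 <= P.
  apply: sumr_ge0 => e /andP [_ pos]; apply: mulr_ge0 => //.
  by rewrite ler0c ltW.
have Q_le0 : forall e, E e && ~~ (0 < we e) -> 0 <= - ((we e)%:C * nn e).
  move=> e /andP [_ pos]; rewrite -mulNr; apply: mulr_ge0 => //.
  by rewrite -rmorphN ler0c oppr_ge0 leNgt.
have H0 : P + z * Q = 0 by rewrite -Hsplit.
case: (eqVneq Q 0) => Q0; last first.
  have zQ : z * Q = - P by apply/eqP; rewrite -addr_eq0 addrC H0.
  have zE : z = P / (- Q) by rewrite invrN mulrN -mulNr -zQ mulfK.
  have z_ge0 : 0 <= z.
    rewrite zE divr_ge0 // /Q -sumrN; apply: sumr_ge0 => e; exact: Q_le0.
  have zr := ger0_real z_ge0.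
  by split; [exact/Creal_ImP | rewrite (Creal_ReP _ zr)].
exfalso.
have P0 : P = 0 by move: H0; rewrite Q0 mulr0 addr0.
have Pz := psumr_eq0P _ P0.
have Qz : forall e, E e && ~~ (0 < we e) -> - ((we e)%:C * nn e) = 0.
  apply: psumr_eq0P => //; by rewrite sumrN -/Q Q0 oppr0.
have ye0 : forall e, E e -> ye e = 0.
  move=> e Ee; have : (we e)%:C * nn e = 0.
    case: (boolP (0 < we e)) => pos.
      by apply: Pz; [move=> e' /andP [_ p']; apply: mulr_ge0 => //; rewrite ler0c ltW | rewrite Ee pos].
    by apply/eqP; rewrite -oppr_eq0; apply/eqP; apply: Qz; rewrite Ee pos.
  move/eqP; rewrite mulf_eq0 => /orP [|].
    by rewrite fmorph_eq0 => wz; move: Ee => /andP [_]; rewrite /we in wz; rewrite wz.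
  by rewrite /nn mul_conjC_eq0 => /eqP.
have xc : forall i j, w i j != 0 -> x i = x j.
  move=> i j wij; case: (ltngtP i j) => [lt|gt|eq].
  - by apply/eqP; rewrite -subr_eq0; apply/eqP; apply: (ye0 (i, j)); rewrite /E /= lt wij.
  - apply/esym/eqP; rewrite -subr_eq0; apply/eqP; apply: (ye0 (j, i)).
    by rewrite /E /= gt wsym.
  - have ij : i = j by apply: val_inj.
    by move: wij; rewrite ij wdiag eqxx.
have cl : closed (adj w) [pred u | x u == x ord_max].
  by move=> a b /xc; rewrite !inE => ->.
case/eqP: vnz; apply/rowP => a; rewrite mxE.
have := closed_connect cl (wconn ord_max (lift ord_max a)); rewrite !inE eqxx.
by move=> /esym /eqP; rewrite /x ext_lift ext_r.
Qed.
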